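(* For each integer $q\ge2$, let $\rho_q$ be the unique number in $(0,1)$ satisfying $\rho_q+\rho_q^2+\dots+\rho_q^{q-1}=\frac{q-1}{3}(1+2\rho_q^q)$, and let $\gamma_q:=\ln(1-\rho_q^q)-\ln(1-\rho_q)-\frac{q-1}{3}\ln(\rho_q)$. Then $\lim_{q\to\infty}\frac{\gamma_q}{\ln q}=1$. *)

(* Defs.v *)
From Stdlib Require Import Reals Lra ClassicalEpsilon.
From Coquelicot Require Import Coquelicot.
Open Scope R_scope.

Definition rho_eq (q : nat) (x : R) : Prop :=
  sum_n_m (fun i => x ^ i) 1 (q - 1) = (INR q - 1) / 3 * (1 + 2 * x ^ q).

Definition rho (q : nat) : R :=
  epsilon (inhabits 0) (fun x => 0 < x < 1 /\ rho_eq q x).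

Definition gamma (q : nat) : R :=
  ln (1 - rho q ^ q) - ln (1 - rho q) - (INR q - 1) / 3 * ln (rho q).

(* Main.v *)
Require Import Defs.
From Stdlib Require Import Reals Lra Lia Psatz ClassicalEpsilon.
From Coquelicot Require Import Coquelicot.
Open Scope R_scope.

Lemma ln_le_sub1 y : 0 < y -> ln y <= y - 1.
Proof.
  intros Hy. destruct (Req_dec (ln y) 0) as [E|E].
  - rewrite E. rewrite <- (exp_ln y Hy), E, exp_0. lra.
  - pose proof (exp_ineq1 (ln y) E). rewrite exp_ln in H; lra.
Qed.

Lemma ln_ge_inv y : 0 < y -> 1 - / y <= ln y.
Proof.
  intros Hy. pose proof (ln_le_sub1 (/ y) (Rinv_0_lt_compat _ Hy)).
  rewrite ln_Rinv in H by lra. lra.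
Qed.

Lemma sum_closed x m :
  sum_n_m (fun i => x ^ i) 1 m * (1 - x) = x - x ^ (S m).
Proof.
  induction m.
  - rewrite sum_n_m_zero by lia. unfold zero; simpl. ring.
  - rewrite sum_n_Sm by lia. unfold plus; simpl in *.
    rewrite Rmult_plus_distr_r, IHm. ring.
Qed.

Lemma bern2 e m : 0 <= e <= 1 ->
  (1 - e) ^ m <= 1 - INR m * e + INR m * (INR m - 1) / 2 * e ^ 2.
Proof.
  intros He. induction m.
  - simpl. lra.
  - rewrite S_INR. simpl pow.
    assert (Hm : 0 <= INR m * (INR m - 1)).
    { destruct m. simpl; lra. rewrite S_INR. pose proof (pos_INR m). nra. }
    apply Rle_trans with ((1 - e) * (1 - INR m * e + INR m * (INR m - 1) / 2 * e ^ 2)).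
    + apply Rmult_le_compat_l; lra.
    + simpl. assert (0 <= INR m * (INR m - 1) * (e*e*e)).
      { apply Rmult_le_pos; auto. apply Rmult_le_pos; nra. }
      nra.
Qed.

Lemma bern1 e m : 0 <= e -> 1 + INR m * e <= (1 + e) ^ m.
Proof.
  intros He. induction m.
  - simpl. lra.
  - rewrite S_INR. simpl pow. pose proof (pos_INR m). nra.
Qed.

Lemma key_bounds n x : (1 <= n)%nat -> 0 < x < 1 ->
  3 * (x - x ^ (S n)) = INR n * (1 - x) * (1 + 2 * x ^ (S n)) ->
  / 2 <= INR n * (1 - x) <= 3.
Proof.
  intros Hn Hx H.
  set (e := 1 - x) in *. set (v := x ^ S n) in *.
  assert (Hv : 0 < v) by (apply pow_lt; lra).
  assert (HnR : 1 <= INR n) by (apply (le_INR 1); lia).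
  assert (He : 0 < e) by (unfold e; lra).
  split.
  - destruct (Rlt_or_le (INR n * e) (/2)) as [Hl|Hl]; [exfalso|lra].
    pose proof (bern2 e (S n)) as B. replace (1 - e) with x in B by (unfold e; ring).
    fold v in B. rewrite S_INR in B. specialize (B ltac:(unfold e; lra)).
    assert (Heq : v * (3 + 2 * INR n * e) = 3 - 3 * e - INR n * e).
    { replace x with (1 - e) in H by (unfold e; ring). nra. }
    set (Bv := 1 - (INR n + 1) * e + (INR n + 1) * (INR n + 1 - 1) / 2 * e ^ 2) in B.
    assert (Hid : Bv * (3 + 2 * INR n * e) - (3 - 3 * e - INR n * e)
             = INR n * (INR n + 1) * e ^ 2 * (INR n * e - / 2)) by (unfold Bv; field).
    assert (v * (3 + 2 * INR n * e) <= Bv * (3 + 2 * INR n * e)).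
    { apply Rmult_le_compat_r; nra. }
    assert (0 < INR n * (INR n + 1) * e ^ 2) by (apply Rmult_lt_0_compat; [nra| apply pow_lt; lra]).
    nra.
  - replace x with (1 - e) in H by (unfold e; ring). nra.
Qed.
Lemma rho_eq_iff n x : x <> 1 ->
  (rho_eq (S n) x <-> 3 * (x - x ^ (S n)) = INR n * (1 - x) * (1 + 2 * x ^ (S n))).
Proof.
  intros Hx. unfold rho_eq. replace (S n - 1)%nat with n by lia.
  rewrite S_INR. replace (INR n + 1 - 1) with (INR n) by ring.
  pose proof (sum_closed x n) as C.
  set (s := sum_n_m (fun i => x ^ i) 1 n) in *.
  assert (Hne : 1 - x <> 0) by lra.
  split; intros H.
  - rewrite <- C, H. field.
  - apply (Rmult_eq_reg_r (3 * (1 - x))); [|lra].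
    replace (s * (3 * (1 - x))) with (3 * (s * (1 - x))) by ring.
    rewrite C, H. field.
Qed.

Lemma rho_exists n : (1 <= n)%nat -> exists x, 0 < x < 1 /\ rho_eq (S n) x.
Proof.
  intros Hn.
  assert (HnR : 1 <= INR n) by (apply (le_INR 1); lia).
  set (h := fun x => 3 * (x - x ^ (S n)) - INR n * (1 - x) * (1 + 2 * x ^ (S n))).
  set (x0 := 1 - / (4 * INR n)).
  assert (Hx0 : 0 < x0 < 1).
  { unfold x0. assert (0 < / (4 * INR n) <= / 4).
    { split. apply Rinv_0_lt_compat; lra. apply Rinv_le_contravar; lra. }
    lra. }
  assert (Hc : continuity h).
  { unfold h. reg. }
  assert (H0 : h 0 < 0).
  { unfold h. rewrite pow_i by lia. lra. }
  assert (H1 : 0 < h x0).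
  { unfold h. set (e := / (4 * INR n)).
    assert (Hne : INR n * e = / 4) by (unfold e; field; lra).
    assert (He : 0 < e <= /4).
    { split. unfold e; apply Rinv_0_lt_compat; lra.
      unfold e; apply Rinv_le_contravar; lra. }
    replace x0 with (1 - e) by reflexivity.
    pose proof (bern2 e (S n) ltac:(lra)) as B. rewrite S_INR in B.
    set (v := (1 - e) ^ S n) in *.
    set (Bv := 1 - (INR n + 1) * e + (INR n + 1) * (INR n + 1 - 1) / 2 * e ^ 2) in B.
    assert (Hid : Bv * (3 + 2 * INR n * e) - (3 - 3 * e - INR n * e)
             = INR n * (INR n + 1) * e ^ 2 * (INR n * e - / 2)) by (unfold Bv; field).
    assert (v * (3 + 2 * INR n * e) <= Bv * (3 + 2 * INR n * e)).
    { apply Rmult_le_compat_r; nra. }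
    assert (0 < INR n * (INR n + 1) * e ^ 2) by (apply Rmult_lt_0_compat; [nra| apply pow_lt; lra]).
    nra. }
  destruct (IVT h 0 x0 Hc ltac:(lra) H0 H1) as [z [Hz Hhz]].
  assert (z <> 0) by (intro; subst; lra).
  exists z. split. lra.
  apply rho_eq_iff. lra. unfold h in Hhz. lra.
Qed.

Lemma rho_spec n : (1 <= n)%nat -> 0 < rho (S n) < 1 /\ rho_eq (S n) (rho (S n)).
Proof.
  intros Hn. unfold rho. apply epsilon_spec. now apply rho_exists.
Qed.
Lemma gamma_bound n : (6 <= n)%nat -> Rabs (gamma (S n) - ln (INR (S n))) <= 5.
Proof.
  intros Hn.
  destruct (rho_spec n ltac:(lia)) as [Hx Heq].
  assert (HnR : INR 6 <= INR n) by (apply le_INR; lia). simpl in HnR.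
  apply rho_eq_iff in Heq; [|lra].
  pose proof (key_bounds n _ ltac:(lia) Hx Heq) as [L U].
  unfold gamma. rewrite S_INR. replace (INR n + 1 - 1) with (INR n) by ring.
  set (x := rho (S n)) in *. set (e := 1 - x).
  assert (He : 0 < e) by (unfold e; lra).
  assert (Lne : / 2 <= INR n * e) by (unfold e; lra).
  assert (Une : INR n * e <= 3) by (unfold e; lra).
  assert (Hel : e <= / 2).
  { apply (Rmult_le_reg_l (INR n)). lra. unfold e in *.  nra. }
  assert (Hv : x ^ S n <= 2 / 3).
  { pose proof (bern1 e n (Rlt_le _ _ He)).
    assert (Hp : (1 - e) ^ n * (1 + e) ^ n <= 1).
    { rewrite <- Rpow_mult_distr.
      assert (Hq : 0 <= (1-e)*(1+e) <= 1) by (split; nra).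
      pose proof (pow_incr _ _ n Hq) as Hq'. rewrite pow1 in Hq'. exact Hq'. }
    assert (Hxn : x ^ n <= 2/3).
    { replace x with (1 - e) by (unfold e; ring).
      assert (Ha : 0 <= (1-e)^n) by (apply pow_le; lra).
      assert (Hne : / 2 <= INR n * e) by (unfold e; lra).
      set (a := (1-e)^n) in *. set (b := (1+e)^n) in *.
      assert (a * (1 + INR n * e) <= a * b) by (apply Rmult_le_compat_l; lra).
      nra. }
    simpl. assert (0 <= x^n) by (apply pow_le; lra). nra. }
  assert (Hv0 : 0 < x ^ S n) by (apply pow_lt; lra).
  pose proof (ln_le_sub1 (1 - x ^ S n) ltac:(lra)) as A1.
  pose proof (ln_ge_inv (1 - x ^ S n) ltac:(lra)) as A2.
  assert (A3 : / (1 - x ^ S n) <= 3).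
  { replace 3 with (/ (/3)) by field. apply Rinv_le_contravar; lra. }
  assert (Hqe : ln e + ln (INR n + 1) = ln ((INR n + 1) * e)).
  { rewrite ln_mult by lra. ring. }
  pose proof (ln_le_sub1 ((INR n + 1) * e) ltac:(nra)) as B1.
  pose proof (ln_ge_inv ((INR n + 1) * e) ltac:(nra)) as B2.
  assert (B3 : / ((INR n + 1) * e) <= 2).
  { replace 2 with (/ (/2)) by field. apply Rinv_le_contravar; nra. }
  pose proof (ln_le_sub1 x ltac:(lra)) as C1.
  pose proof (ln_ge_inv x ltac:(lra)) as C2.
  assert (C3 : INR n / 3 * ln x >= - 2).
  { assert (/ x <= 2).
    { replace 2 with (/ (/2)) by field. apply Rinv_le_contravar; unfold e in *; lra. }
    assert (Hlx : - ln x <= (1 - x) / x).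
    { replace ((1 - x) / x) with (/x - 1) by (field; lra). lra. }
    assert (INR n * (- ln x) <= INR n * ((1 - x) / x)) by (apply Rmult_le_compat_l; lra).
    assert (INR n * ((1 - x) / x) = INR n * e * / x) by (unfold e, Rdiv; ring).
    assert (INR n * e * / x <= 3 * 2).
    { apply Rmult_le_compat; try lra. }
    lra. }
  assert (C4 : INR n / 3 * ln x <= 0).
  { assert (ln x <= 0) by lra.
    assert (INR n/3 * ln x <= INR n / 3 * 0) by (apply Rmult_le_compat_l; lra). lra. }
  apply Rabs_le. split; lra.
Qed.

Theorem mainTheorem6 :
  is_lim_seq (fun q : nat => gamma q / ln (INR q)) 1.
Proof.
  apply is_lim_seq_Reals. intros eps Heps.
  destruct (INR_unbounded (exp (5 / eps))) as [N HN].
  exists (N + 7)%nat. intros q Hq.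
  destruct q as [|n]; [lia|].
  assert (Hn : (6 <= n)%nat) by lia.
  pose proof (gamma_bound n Hn) as G.
  assert (HqR : INR N <= INR (S n)) by (apply le_INR; lia).
  assert (Hexp : 0 < exp (5 / eps)) by apply exp_pos.
  assert (Hl : 5 / eps < ln (INR (S n))).
  { rewrite <- (ln_exp (5 / eps)). apply ln_increasing; lra. }
  assert (Hpos : 0 < 5 / eps) by (apply Rdiv_lt_0_compat; lra).
  set (L := ln (INR (S n))) in *.
  set (g := gamma (S n)) in *.
  unfold Rdist.
  replace (g / L - 1) with ((g - L) / L) by (field; lra).
  unfold Rdiv. rewrite Rabs_mult, (Rabs_pos_eq (/ L)) by (left; apply Rinv_0_lt_compat; lra).
  apply Rle_lt_trans with (5 * / L).
  { apply Rmult_le_compat_r; [left; apply Rinv_0_lt_compat; lra | exact G]. }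
  apply (Rmult_lt_reg_r L); [lra|].
  rewrite Rmult_assoc, Rinv_l by lra.
  apply (Rmult_lt_reg_r (/ eps)); [apply Rinv_0_lt_compat; lra|].
  replace (5 * 1 * / eps) with (5 / eps) by (unfold Rdiv; ring).
  replace (eps * L * / eps) with L by (field; lra). exact Hl.
Qed.
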